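(* If $G \le \mathrm{Sym}(\mathbb{N})$ is a cofinitary group that is eventually bounded, then $G$ is not a maximal cofinitary group. In particular, no maximal cofinitary group is a $K_\sigma$ subset of $\mathbb{N}^{\mathbb{N}}$.
   Context: $\mathrm{Sym}(\mathbb{N})\subseteq\mathbb{N}^{\mathbb{N}}$ is the group of bijections of $\mathbb{N}$, with the topology inherited from Baire space. A subgroup is cofinitary if each non-identity element has finitely many fixed points, and maximal cofinitary if it is cofinitary and not properly contained in another cofinitary subgroup. For $f,g\in\mathbb{N}^{\mathbb{N}}$, $f<^* g$ means $f(n)<g(n)$ for all but finitely many $n$; a set $S\subseteq\mathbb{N}^{\mathbb{N}}$ is eventually bounded if there is $f\in\mathbb{N}^{\mathbb{N}}$ with $g<^*f$ for all $g\in S$. A set is $K_\sigma$ if it is contained in a countable union of compact sets. *)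

(* Defs.v *)
From Stdlib Require Import Arith List.

Definition baire := nat -> nat.

Definition bijective_nat (f : baire) : Prop :=
  exists g : baire, (forall n, g (f n) = n) /\ (forall n, f (g n) = n).

Definition is_subgroup_Sym (G : baire -> Prop) : Prop :=
  (forall f, G f -> bijective_nat f) /\
  G (fun n => n) /\
  (forall f g, G f -> G g -> G (fun n => f (g n))) /\
  (forall f, G f -> exists g, G g /\ (forall n, g (f n) = n) /\ (forall n, f (g n) = n)).

Definition finitely_many_fixed_points (f : baire) : Prop :=
  exists N, forall n, N <= n -> f n <> n.

Definition cofinitary (G : baire -> Prop) : Prop :=
  is_subgroup_Sym G /\
  (forall f, G f -> (exists n, f n <> n) -> finitely_many_fixed_points f).

Definition maximal_cofinitary (G : baire -> Prop) : Prop :=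
  cofinitary G /\
  (forall H : baire -> Prop, cofinitary H -> (forall f, G f -> H f) -> forall f, H f -> G f).

Definition eventually_lt (f g : baire) : Prop :=
  exists N, forall n, N <= n -> f n < g n.

Definition eventually_bounded (S : baire -> Prop) : Prop :=
  exists f : baire, forall g, S g -> eventually_lt g f.

Definition baire_open (U : baire -> Prop) : Prop :=
  forall f, U f -> exists n, forall g, (forall k, k < n -> g k = f k) -> U g.

Definition baire_compact (K : baire -> Prop) : Prop :=
  forall (I : Type) (U : I -> baire -> Prop),
    (forall i, baire_open (U i)) ->
    (forall f, K f -> exists i, U i f) ->
    exists l : list I, forall f, K f -> exists i, In i l /\ U i f.

Definition K_sigma (S : baire -> Prop) : Prop :=
  exists K : nat -> baire -> Prop,
    (forall m, baire_compact (K m)) /\ (forall f, S f -> exists m, K m f).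

(* Main.v *)
Require Import Defs.
From Stdlib Require Import Arith List Lia Classical ClassicalEpsilon.
Import ListNotations.

Definition TI (p : baire) := forall M, exists N, forall x, N <= x -> M <= p x.
Fixpoint bnd (q : baire) (M : nat) : nat :=
  match M with 0 => 0 | S M' => Nat.max (bnd q M') (S (q M')) end.
Lemma bnd_spec q M m : m < M -> q m < bnd q M.
Proof.
  induction M; intros H; [lia|]. simpl. destruct (Nat.eq_dec m M); subst; [lia|].
  specialize (IHM ltac:(lia)); lia.
Qed.
Lemma TI_inv p q : (forall x, q (p x) = x) -> TI p.
Proof.
  intros Hpq M. exists (bnd q M). intros x Hx. destruct (le_lt_dec M (p x)); auto.
  exfalso. pose proof (bnd_spec q M (p x) l) as H. rewrite Hpq in H. lia.
Qed.

Section Constr.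
Variable f : baire.

Fixpoint F (x : nat) : nat :=
  match x with 0 => S (f 0) | S y => F y + S (f (S y)) end.

Lemma F_ge_f x : f x < F x.
Proof. destruct x; simpl; lia. Qed.
Lemma F_gt x : x < F x.
Proof. induction x; simpl; lia. Qed.
Lemma F_mono x y : x <= y -> F x <= F y.
Proof. induction 1; auto. simpl; lia. Qed.

Fixpoint Hf (x : nat) : nat :=
  match x with 0 => F 0 | S y => F (Hf y) + F (S y) + Hf y + 1 end.
Lemma H_step x : Hf x < Hf (S x).
Proof. simpl; lia. Qed.
Lemma H_lt y : forall x, x < y -> Hf x < Hf y.
Proof.
  induction y; intros x H; [lia|].
  destruct (Nat.eq_dec x y); subst; [apply H_step|].
  specialize (IHy x ltac:(lia)). pose proof (H_step y). lia.
Qed.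
Lemma H_mono x y : x <= y -> Hf x <= Hf y.
Proof. intros H. destruct (Nat.eq_dec x y); subst; auto. pose proof (H_lt y x ltac:(lia)); lia. Qed.
Lemma H_le_inv x y : Hf x <= Hf y -> x <= y.
Proof. intros H. destruct (le_lt_dec x y); auto. pose proof (H_lt x y l); lia. Qed.
Lemma H_inj x y : Hf x = Hf y -> x = y.
Proof. intros H. apply Nat.le_antisymm; apply H_le_inv; lia. Qed.
Lemma H_geF x : F x <= Hf x.
Proof. destruct x; simpl; lia. Qed.
Lemma H_gt x : x < Hf x.
Proof. pose proof (F_gt x); pose proof (H_geF x); lia. Qed.
Lemma H_spaced x y : x < y -> F (Hf x) <= Hf y.
Proof.
  intros H. assert (F (Hf x) <= Hf (S x)) by (simpl; lia).
  pose proof (H_mono (S x) y H). lia.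
Qed.

Definition root r := forall y, Hf y <> r.
Definition Ev x := exists r d, root r /\ Nat.Even d /\ Nat.iter d Hf r = x.

Lemma rep x : exists r d, root r /\ Nat.iter d Hf r = x.
Proof.
  induction x as [x IH] using (well_founded_induction lt_wf).
  destruct (classic (exists y, Hf y = x)) as [[y Hy]|Hn].
  - destruct (IH y) as [r [d [Hr Hd]]]. { rewrite <- Hy; apply H_gt. }
    exists r, (S d). split; auto. simpl. congruence.
  - exists x, 0. split; [intros y Hy; apply Hn; eauto | reflexivity].
Qed.

Lemma rep_uniq d : forall d' r r', root r -> root r' ->
  Nat.iter d Hf r = Nat.iter d' Hf r' -> d = d'.
Proof.
  induction d as [|d IH]; intros [|d'] r r' Hr Hr' E; simpl in E.
  - reflexivity.
  - exfalso. apply (Hr _ (eq_sym E)).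
  - exfalso. apply (Hr' _ E).
  - f_equal. apply H_inj in E. exact (IH d' r r' Hr Hr' E).
Qed.

Lemma Ev_rep r d x : root r -> Nat.iter d Hf r = x -> (Ev x <-> Nat.Even d).
Proof.
  intros Hr Hx; split.
  - intros [r' [d' [Hr' [He Hx']]]]. rewrite <- Hx in Hx'.
    rewrite (rep_uniq d' d r' r Hr' Hr Hx') in He. exact He.
  - intros He; exists r, d; auto.
Qed.

Lemma Ev_H x : Ev (Hf x) <-> ~ Ev x.
Proof.
  destruct (rep x) as [r [d [Hr Hx]]].
  rewrite (Ev_rep r d x Hr Hx).
  assert (Hx' : Nat.iter (S d) Hf r = Hf x) by (simpl; congruence).
  rewrite (Ev_rep r (S d) _ Hr Hx').
  rewrite Nat.Even_succ. split.
  - intros Ho He. exact (Nat.Even_Odd_False d He Ho).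
  - intros Hn. destruct (Nat.Even_or_Odd d); tauto.
Qed.

Lemma Ev_notH x : ~ Ev x -> exists y, Hf y = x.
Proof.
  intros Hn. destruct (rep x) as [r [[|d] [Hr Hx]]].
  - exfalso; apply Hn; exists r, 0; repeat split; auto. exists 0; reflexivity.
  - exists (Nat.iter d Hf r); exact Hx.
Qed.

Definition sg (x : nat) : nat :=
  if excluded_middle_informative (Ev x) then Hf x
  else epsilon (inhabits 0) (fun y => Hf y = x).

Lemma sg_Ev x : Ev x -> sg x = Hf x.
Proof. unfold sg; destruct (excluded_middle_informative (Ev x)); tauto. Qed.
Lemma sg_nEv x : ~ Ev x -> Hf (sg x) = x.
Proof.
  intros Hn. unfold sg; destruct (excluded_middle_informative (Ev x)); [contradiction|].
  apply epsilon_spec. apply Ev_notH; auto.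
Qed.
Lemma sg_nEv_Ev x : ~ Ev x -> Ev (sg x).
Proof.
  intros Hn. pose proof (sg_nEv x Hn) as E.
  destruct (classic (Ev (sg x))) as [|Hc]; auto. exfalso.
  apply Ev_H in Hc. rewrite E in Hc. contradiction.
Qed.
Lemma sg_Ev_nEv x : Ev x -> ~ Ev (sg x).
Proof. intros He. rewrite sg_Ev by auto. intros E'. apply (proj1 (Ev_H x) E'); auto. Qed.
Lemma sg_inv x : sg (sg x) = x.
Proof.
  destruct (classic (Ev x)) as [He|Hn].
  - pose proof (sg_Ev_nEv x He) as N. rewrite (sg_Ev x He) in *.
    apply H_inj. apply sg_nEv; auto.
  - rewrite (sg_Ev (sg x) (sg_nEv_Ev x Hn)). apply sg_nEv; auto.
Qed.
Lemma sg_nofix x : sg x <> x.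
Proof.
  destruct (classic (Ev x)) as [He|Hn].
  - rewrite sg_Ev by auto. pose proof (H_gt x); lia.
  - intros E. pose proof (sg_nEv x Hn) as E2. rewrite E in E2. pose proof (H_gt x); lia.
Qed.

Definition Good (g : baire) T :=
  forall x, T <= x -> g x < F x /\ g x <> x /\ (forall y, g y = x -> y < F x).

Definition Inv x0 z := (Ev x0 /\ Ev z /\ z < x0) \/ (~ Ev z /\ (Ev x0 \/ x0 < z)).
Definition Inv' x0 z := (Ev x0 /\ Ev z /\ z <= x0) \/ (~ Ev z /\ (Ev x0 \/ x0 <= z)).

Lemma Inv_Inv' x0 z : Inv x0 z -> Inv' x0 z.
Proof. unfold Inv, Inv'. intuition lia. Qed.
Lemma Inv'_refl x : Inv' x x.
Proof. unfold Inv'. destruct (classic (Ev x)); [left|right]; auto. Qed.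
Lemma Inv_neq x0 z : Inv x0 z -> z <> x0.
Proof. unfold Inv. intros [[_ [_ H]]|[H [H'|H']]]; try lia. intro; subst; contradiction. Qed.

Lemma step g T x0 z : Good g T -> T <= z -> T <= g z -> Inv' x0 z -> Inv x0 (sg (g z)).
Proof.
  intros Hg Hz Hy HI.
  destruct (Hg z Hz) as [A1 [A2 _]].
  destruct (Hg (g z) Hy) as [_ [_ A3]].
  specialize (A3 z eq_refl).
  set (y := g z) in *.
  destruct HI as [[E0 [Ez Hle]] | [Nz Hc]].
  - destruct (classic (Ev y)) as [Ey|Ny].
    + right. split; [apply sg_Ev_nEv; auto | left; auto].
    + left. split; auto. split; [apply sg_nEv_Ev; auto|].
      pose proof (sg_nEv y Ny) as E.
      destruct (le_lt_dec z (sg y)) as [Hl|Hl]; [exfalso|lia].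
      pose proof (H_mono _ _ Hl). pose proof (H_geF z). lia.
  - destruct (classic (Ev y)) as [Ey|Ny].
    + right. split; [apply sg_Ev_nEv; auto|]. rewrite sg_Ev by auto.
      pose proof (sg_nEv z Nz) as Ep.
      destruct (le_lt_dec (Hf y) z) as [Hl|Hl].
      * exfalso. rewrite <- Ep in Hl. apply H_le_inv in Hl. apply F_mono in Hl.
        pose proof (H_geF (sg z)). lia.
      * destruct Hc; [left; auto|right; lia].
    + exfalso. pose proof (sg_nEv y Ny) as Ey'. pose proof (sg_nEv z Nz) as Ez'.
      destruct (lt_eq_lt_dec (sg y) (sg z)) as [[Hl|Hl]|Hl].
      * apply H_spaced in Hl. rewrite Ey', Ez' in Hl. lia.
      * apply A2. rewrite <- Ey', <- Ez', Hl. reflexivity.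
      * apply H_spaced in Hl. rewrite Ey', Ez' in Hl. lia.
Qed.

End Constr.
Section GS.
Variable f : baire.
Variable G : baire -> Prop.
Hypothesis HG : cofinitary G.
Hypothesis Hb : forall g, G g -> eventually_lt g f.

Lemma Gid : G (fun n => n).
Proof. destruct HG as [[_ [H _]] _]; exact H. Qed.
Lemma Gcomp : forall a b, G a -> G b -> G (fun n => a (b n)).
Proof. destruct HG as [[_ [_ [H _]]] _]; exact H. Qed.
Lemma Ginv : forall a, G a -> exists b, G b /\ (forall n, b (a n) = n) /\ (forall n, a (b n) = n).
Proof. destruct HG as [[_ [_ [_ H]]] _]; exact H. Qed.
Lemma Gcof : forall a, G a -> (exists n, a n <> n) -> finitely_many_fixed_points a.
Proof. destruct HG as [_ H]; exact H. Qed.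

Definition tok (t : option baire) (x : nat) : nat :=
  match t with None => sg f x | Some g => g x end.
Fixpoint evalT (l : list (option baire)) (x : nat) : nat :=
  match l with [] => x | t :: l' => evalT l' (tok t x) end.
Lemma evalT_app l1 l2 x : evalT (l1 ++ l2) x = evalT l2 (evalT l1 x).
Proof. revert x; induction l1; simpl; auto. Qed.
Definition okG (t : option baire) := match t with None => True | Some g => G g end.
Definition Hsub (h : baire) := exists l, Forall okG l /\ forall x, h x = evalT l x.

Lemma tok_inv t : okG t -> exists t', okG t' /\ (forall x, tok t' (tok t x) = x) /\ (forall x, tok t (tok t' x) = x).
Proof.
  destruct t as [g|]; simpl; intros H.
  - destruct (Ginv g H) as [g' [Hg' [H1 H2]]]. exists (Some g'); simpl; auto.
  - exists None; simpl; split; [exact I|split; intros; apply sg_inv].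
Qed.

Lemma evalT_inv l : Forall okG l -> exists l', Forall okG l' /\
  (forall x, evalT l' (evalT l x) = x) /\ (forall x, evalT l (evalT l' x) = x).
Proof.
  induction 1 as [|t l Ht Hl IH].
  - exists []. simpl; auto.
  - destruct IH as [l0 [Hl0 [A B]]]. destruct (tok_inv t Ht) as [t' [Ht' [C D]]].
    exists (l0 ++ [t']). split; [apply Forall_app; auto|].
    split; intros y; rewrite evalT_app; simpl.
    + rewrite A, C; reflexivity.
    + rewrite D, B; reflexivity.
Qed.

Lemma Hsub_sub : is_subgroup_Sym Hsub.
Proof.
  split; [|split; [|split]].
  - intros h [l [Hl He]]. destruct (evalT_inv l Hl) as [l' [_ [A B]]].
    exists (evalT l'). split; intros n; rewrite He; auto.
  - exists []. split; auto.
  - intros a b [la [Ha Ea]] [lb [Hb' Eb]]. exists (lb ++ la). split; [apply Forall_app; auto|].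
    intros x. rewrite evalT_app, Eb, Ea. reflexivity.
  - intros h [l [Hl He]]. destruct (evalT_inv l Hl) as [l' [Hl' [A B]]].
    exists (evalT l'). split; [exists l'; auto|]. split; intros n; rewrite He; auto.
Qed.

Definition PC (h : baire) := finitely_many_fixed_points h \/ (forall x, h x = x).
Lemma PC_ext h h' : (forall x, h x = h' x) -> PC h' -> PC h.
Proof.
  intros E [[N HN]|HI]; [left; exists N; intros n Hn; rewrite E; auto|right; intros; rewrite E; auto].
Qed.

Lemma tok_TI t : okG t -> TI (tok t).
Proof. intros H. destruct (tok_inv t H) as [t' [_ [A _]]]. exact (TI_inv _ _ A). Qed.

Lemma rotate t m : okG t -> PC (evalT (m ++ [t])) -> PC (evalT (t :: m)).
Proof.
  intros Ht [[N HN]|HI].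
  - left. destruct (tok_TI t Ht N) as [N' HN']. exists N'. intros x Hx Hfix.
    simpl in Hfix. apply (HN (tok t x) (HN' x Hx)). rewrite evalT_app. simpl.
    rewrite Hfix. reflexivity.
  - right. intros x. simpl. destruct (tok_inv t Ht) as [t' [_ [A _]]].
    specialize (HI (tok t x)). rewrite evalT_app in HI. simpl in HI.
    rewrite <- (A (evalT m (tok t x))), HI, A. reflexivity.
Qed.

Definition moved (g : baire) := exists x, g x <> x.
Definition okR t := match t with None => True | Some g => G g /\ moved g end.
Definition compat (t1 t2 : option baire) :=
  match t1, t2 with Some _, Some _ => False | None, None => False | _, _ => True end.
Fixpoint Red (l : list (option baire)) : Prop :=
  match l with
  | [] => True
  | t :: l' => okR t /\ match l' with [] => True | t2 :: _ => compat t t2 end /\ Red l'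
  end.

Lemma reduce l : Forall okG l -> Red l \/ exists l', length l' < length l /\
  Forall okG l' /\ forall x, evalT l' x = evalT l x.
Proof.
  induction 1 as [|t l Ht Hl IH].
  - left; exact I.
  - destruct IH as [HR | [l' [Hlen [Hl' He]]]].
    + destruct t as [g|].
      * destruct (classic (moved g)) as [Hm|Hm].
        -- destruct l as [|t2 l2].
           ++ left. simpl. tauto.
           ++ destruct t2 as [g2|].
              ** right. inversion Hl; subst.
                 exists (Some (fun n => g2 (g n)) :: l2). split; [simpl; lia|]. split.
                 { constructor; auto. apply Gcomp; auto. }
                 intros x; reflexivity.
              ** left. simpl in HR |- *. tauto.
        -- right. exists l. split; [simpl; lia|]. split; auto. intros x; simpl.
           assert (E : g x = x) by (apply NNPP; intro; apply Hm; exists x; auto).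
           rewrite E; auto.
      * destruct l as [|t2 l2].
        -- left; simpl; tauto.
        -- destruct t2 as [g2|].
           ++ left. simpl in HR |- *. tauto.
           ++ right. exists l2. simpl; split; [lia|]. split; [inversion Hl; auto|].
              intros x; rewrite sg_inv; reflexivity.
    + right. exists (t :: l'). simpl. split; [lia|]. split; [constructor; auto|].
      intros x; apply He.
Qed.

Fixpoint pairs (gs : list baire) : list (option baire) :=
  match gs with [] => [] | g :: gs' => Some g :: None :: pairs gs' end.

Lemma pairs_snoc gs g : pairs (gs ++ [g]) = pairs gs ++ [Some g; None].
Proof. induction gs; simpl; auto. rewrite IHgs; auto. Qed.

Lemma Forall_pairs gs : Forall (fun g => G g /\ moved g) gs -> Forall okG (pairs gs).
Proof. induction 1; simpl; auto. constructor; [simpl; tauto|constructor; auto]. exact I. Qed.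

Lemma alt l : Red l -> exists gs, Forall (fun g => G g /\ moved g) gs /\
  (l = pairs gs \/ (exists g, G g /\ moved g /\ l = pairs gs ++ [Some g]) \/
   l = None :: pairs gs \/ (exists g, G g /\ moved g /\ l = None :: pairs gs ++ [Some g])).
Proof.
  induction l as [|t l IH]; intros HR.
  - exists []. split; auto.
  - simpl in HR. destruct HR as [Ht [Hc HR]].
    destruct (IH HR) as [gs [Hgs [E|[[g [Gg [Mg E]]]|[E|[g [Gg [Mg E]]]]]]]]; subst l.
    + destruct t as [g0|].
      * destruct gs as [|g1 gs'].
        -- exists []. split; auto. right; left. exists g0. simpl in Ht. tauto.
        -- simpl in Hc. contradiction.
      * exists gs. split; auto.
    + destruct t as [g0|].
      * destruct gs as [|g1 gs']; simpl in Hc; contradiction.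
      * exists gs. split; auto. right; right; right. exists g; auto.
    + destruct t as [g0|].
      * exists (g0 :: gs). split; [constructor; auto|]. left; reflexivity.
      * simpl in Hc; contradiction.
    + destruct t as [g0|].
      * exists (g0 :: gs). split; [constructor; auto|]. right; left. exists g; repeat split; auto.
      * simpl in Hc; contradiction.
Qed.

Lemma good_ex g : G g -> moved g -> exists T, Good f g T.
Proof.
  intros Gg Mg. destruct (Gcof g Gg Mg) as [N2 HN2].
  destruct (Hb g Gg) as [N1 HN1].
  destruct (Ginv g Gg) as [g' [Gg' [I1 I2]]].
  destruct (Hb g' Gg') as [N3 HN3].
  exists (N1 + N2 + N3). intros x Hx. split; [|split].
  - pose proof (HN1 x ltac:(lia)). pose proof (F_ge_f f x). lia.
  - apply HN2; lia.
  - intros y Hy. rewrite <- (I1 y), Hy. pose proof (HN3 x ltac:(lia)). pose proof (F_ge_f f x). lia.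
Qed.

Lemma Good_mono g T T' : T <= T' -> Good f g T -> Good f g T'.
Proof. intros H HG' x Hx. apply HG'; lia. Qed.

Lemma good_list gs : Forall (fun g => G g /\ moved g) gs -> exists T, Forall (fun g => Good f g T) gs.
Proof.
  induction 1 as [|g gs [Gg Mg] Hl [T HT]].
  - exists 0; auto.
  - destruct (good_ex g Gg Mg) as [T' HT']. exists (T + T'). constructor.
    + apply (Good_mono g T'); [lia|exact HT'].
    + eapply Forall_impl; [|exact HT]. intros a Ha. apply (Good_mono a T); [lia|exact Ha].
Qed.

Fixpoint AL (T : nat) (gs : list baire) (z : nat) : Prop :=
  match gs with [] => True | g :: gs' => T <= z /\ T <= g z /\ AL T gs' (sg f (g z)) end.

Lemma AL_ex gs : Forall G gs -> forall T, exists N, forall x, N <= x -> AL T gs x.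
Proof.
  induction 1 as [|g gs Gg Hl IH]; intros T.
  - exists 0; simpl; auto.
  - destruct (IH T) as [N1 HN1].
    destruct (Ginv g Gg) as [g' [_ [I1 _]]].
    assert (T1 : TI (fun x => sg f (g x))).
    { apply (TI_inv _ (fun y => g' (sg f y))). intros x. rewrite sg_inv, I1. reflexivity. }
    assert (T2 : TI g) by exact (TI_inv _ _ I1).
    destruct (T1 N1) as [N2 HN2]. destruct (T2 T) as [N3 HN3].
    exists (T + N2 + N3). intros x Hx. simpl. split; [lia|]. split; [apply HN3; lia|].
    apply HN1. apply HN2. lia.
Qed.

Lemma traj_Inv T x0 gs : forall z, Forall (fun g => Good f g T) gs -> AL T gs z ->
  Inv f x0 z -> Inv f x0 (evalT (pairs gs) z).
Proof.
  induction gs as [|g gs IH]; intros z HG' HA HI; simpl; auto.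
  inversion HG'; subst. destruct HA as [A1 [A2 A3]]. apply IH; auto.
  eapply step; eauto. apply Inv_Inv'; auto.
Qed.

Lemma core gs : gs <> [] -> Forall (fun g => G g /\ moved g) gs ->
  finitely_many_fixed_points (evalT (pairs gs)).
Proof.
  intros Hne Hgs. destruct (good_list gs Hgs) as [T HT].
  assert (HG' : Forall G gs) by (eapply Forall_impl; [|exact Hgs]; intros a []; auto).
  destruct (AL_ex gs HG' T) as [N HN]. exists N. intros x Hx Hfix.
  destruct gs as [|g gs']; [congruence|]. simpl in Hfix.
  inversion HT; subst. pose proof (HN x Hx) as HA. simpl in HA. destruct HA as [A1 [A2 A3]].
  assert (HI : Inv f x (evalT (pairs gs') (sg f (g x)))).
  { apply (traj_Inv T); auto. eapply step; eauto. apply Inv'_refl. }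
  apply Inv_neq in HI. contradiction.
Qed.

Lemma P_all n : forall l, length l <= n -> Forall okG l -> PC (evalT l).
Proof.
  induction n as [n IHn] using (well_founded_induction lt_wf).
  intros l Hlen Hl.
  destruct (reduce l Hl) as [HR | [l' [Hlen' [Hl' He]]]].
  2: { apply (PC_ext _ (evalT l')); [intros; rewrite He; auto|].
       apply (IHn (length l')); auto; lia. }
  destruct (alt l HR) as [gs [Hgs Hcase]].
  destruct Hcase as [E|[[g [Gg [Mg E]]]|[E|[g [Gg [Mg E]]]]]]; subst l.
  - destruct gs as [|g gs']. right; intros; reflexivity. left; apply core; [congruence|auto].
  - destruct gs as [|g1 gs'].
    + left. simpl. exact (Gcof g Gg Mg).
    + inversion Hgs; subst. change (PC (evalT (Some g1 :: (None :: pairs gs' ++ [Some g])))). apply rotate; [simpl; tauto|].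
      apply (PC_ext _ (evalT (None :: pairs gs' ++ [Some (fun n => g1 (g n))]))).
      { intros x. simpl. rewrite !evalT_app. reflexivity. }
      apply (IHn (length (None :: pairs gs' ++ [Some (fun n => g1 (g n))]))); auto.
      * simpl in Hlen |- *. rewrite length_app in *. simpl in *. lia.
      * constructor; [exact I|]. apply Forall_app; split; [apply Forall_pairs; auto|].
        constructor; [|constructor]. simpl. apply Gcomp; tauto.
  - destruct gs as [|g gs'].
    + left. exists 0. intros x _. simpl. apply sg_nofix.
    + destruct (exists_last (l:=g::gs') ltac:(discriminate)) as [gs0 [gl E]].
      rewrite E in *. rewrite pairs_snoc in *.
      apply rotate; [exact I|].
      apply (PC_ext _ (evalT (pairs gs0 ++ [Some gl]))).
      { intros x. rewrite !evalT_app. simpl. rewrite sg_inv. reflexivity. }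
      apply Forall_app in Hgs. destruct Hgs as [Hgs0 Hgl]. inversion Hgl; subst.
      apply (IHn (length (pairs gs0 ++ [Some gl]))); auto.
      * simpl in Hlen. rewrite !length_app in *. simpl in *. lia.
      * apply Forall_app; split; [apply Forall_pairs; auto|]. constructor; [simpl; tauto|auto].
  - apply rotate; [exact I|].
    left. replace ((pairs gs ++ [Some g]) ++ [None]) with (pairs (gs ++ [g])).
    + apply core. destruct gs; discriminate. apply Forall_app; split; auto.
    + rewrite pairs_snoc, <- app_assoc. reflexivity.
Qed.

Lemma Hsub_cof : cofinitary Hsub.
Proof.
  split; [exact Hsub_sub|]. intros h [l [Hl He]] [x Hx].
  destruct (P_all (length l) l (le_n _) Hl) as [[N HN]|HI].
  - exists N. intros n Hn. rewrite He. auto.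
  - exfalso. apply Hx. rewrite He. auto.
Qed.

Lemma not_max : ~ maximal_cofinitary G.
Proof.
  intros [_ Hmax].
  assert (Hs : G (sg f)).
  { apply (Hmax Hsub Hsub_cof).
    - intros g Gg. exists [Some g]. split; [constructor; simpl; auto|]. reflexivity.
    - exists [None]. split; [constructor; simpl; auto|]. reflexivity. }
  destruct (Hb _ Hs) as [N HN].
  destruct (classic (Ev f N)) as [He|Hn].
  - pose proof (HN N (le_n _)). rewrite sg_Ev in H by auto.
    pose proof (H_geF f N). pose proof (F_ge_f f N). lia.
  - assert (He : Ev f (Hf f N)) by (apply Ev_H; auto).
    pose proof (H_gt f N).
    pose proof (HN (Hf f N) ltac:(lia)). rewrite sg_Ev in H0 by auto.
    pose proof (H_geF f (Hf f N)). pose proof (F_ge_f f (Hf f N)). lia.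
Qed.

End GS.

Lemma compact_bound K : baire_compact K -> forall n, exists b, forall g, K g -> g n <= b.
Proof.
  intros HK n. destruct (HK nat (fun i g => g n = i)) as [l Hl].
  - intros i g Hg. exists (S n). intros g' Hg'. rewrite Hg' by lia. auto.
  - intros g _. exists (g n); reflexivity.
  - exists (list_max l). intros g Kg. destruct (Hl g Kg) as [i [Hi Hgi]]. subst i.
    assert (Hm : list_max l <= list_max l) by lia. apply list_max_le in Hm.
    rewrite Forall_forall in Hm. apply Hm; auto.
Qed.

Fixpoint maxupto (b : nat -> nat) (k : nat) : nat :=
  match k with 0 => b 0 | S k' => Nat.max (maxupto b k') (b (S k')) end.
Lemma maxupto_ge b k : forall m, m <= k -> b m <= maxupto b k.
Proof.
  induction k; intros m Hm; simpl.
  - replace m with 0 by lia. lia.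
  - destruct (Nat.eq_dec m (S k)); subst; [lia|]. specialize (IHk m ltac:(lia)). lia.
Qed.

Lemma ksigma_bounded (Sset : baire -> Prop) : K_sigma Sset -> eventually_bounded Sset.
Proof.
  intros [K [HK Hcov]].
  assert (Hb : forall m n, exists b, forall g, K m g -> g n <= b)
    by (intros; apply compact_bound; auto).
  set (bb := fun m n => epsilon (inhabits 0) (fun b => forall g, K m g -> g n <= b)).
  assert (Hbb : forall m n g, K m g -> g n <= bb m n).
  { intros m n g Kg. unfold bb. apply (epsilon_spec (inhabits 0) (fun b => forall g, K m g -> g n <= b) (Hb m n)); auto. }
  exists (fun n => S (maxupto (fun m => bb m n) n)).
  intros g Sg. destruct (Hcov g Sg) as [m Km]. exists m. intros n Hn.
  pose proof (Hbb m n g Km). pose proof (maxupto_ge (fun m => bb m n) n m Hn). simpl in *. lia.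
Qed.

Theorem mainTheorem18 :
  (forall G : baire -> Prop,
      cofinitary G -> eventually_bounded G -> ~ maximal_cofinitary G) /\
  (forall G : baire -> Prop, maximal_cofinitary G -> ~ K_sigma G).
Proof.
  assert (P1 : forall G : baire -> Prop,
      cofinitary G -> eventually_bounded G -> ~ maximal_cofinitary G).
  { intros G HG [f Hf']. exact (not_max f G HG Hf'). }
  split; auto.
  intros G Hm Hk. apply (P1 G (proj1 Hm) (ksigma_bounded G Hk) Hm).
Qed.
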